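(* Let $f:\mathbb{R}^d\times\mathbb{R}^d\to\mathbb{R}^d$ and $g:\mathbb{R}^d\times\mathbb{R}^d\to\mathbb{R}^{d\times m}$ satisfy: (i) for each $R>0$ there is $L_R>0$ such that $|f(x,y)-f(\bar x,\bar y)|\vee|g(x,y)-g(\bar x,\bar y)|\le L_R(|x-\bar x|+|y-\bar y|)$ whenever $|x|\vee|y|\vee|\bar x|\vee|\bar y|\le R$; (ii) there are constants $a_{ii}\in\mathbb{R}$, $a_{ij}\ge0$ for $i\ne j$, $b_{ij}\ge0$ such that for every $i\in\{1,\dots,d\}$ and all $x,y\in\mathbb{R}^d$: $2x_if_i(x,y)+\sum_{l=1}^m g_{il}(x,y)^2\le\sum_{j=1}^d a_{ij}x_j^2+\sum_{j=1}^d b_{ij}y_j^2$. Then for any fixed $\Delta\in(0,\Delta^* )$ there exist constants $a_{ii}\in\mathbb{R}$, $a_{ij}\ge0$ ($i\ne j$), $b_{ij}\ge0$ such that $$2x_if_{\Delta,i}(x,y)+\sum_{l=1}^m g_{\Delta,il}(x,y)^2\le\sum_{j=1}^d a_{ij}x_j^2+\sum_{j=1}^d b_{ij}y_j^2,\qquad i\in\{1,\dots,d\},$$ for all $x,y\in\mathbb{R}^d$, where $f_\Delta, g_\Delta$ are the modified truncated functions defined in the context.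
   Context: Let $\Delta^*>0$ and let $h:(0,\Delta^*]\to(0,\infty)$ be strictly decreasing with $\lim_{\Delta\to0}h(\Delta)=\infty$ and $\lim_{\Delta\to0}L_{h(\Delta)}^2\Delta=0$, where $L_R$ is the local Lipschitz constant above. For $\Delta\in(0,\Delta^* )$ the modified truncated function is $f_\Delta(x,y)=f(x,y)$ if $|x|\vee|y|\le h(\Delta)$ and $f_\Delta(x,y)=\frac{|x|\vee|y|}{h(\Delta)}f\big(\frac{h(\Delta)}{|x|\vee|y|}x,\frac{h(\Delta)}{|x|\vee|y|}y\big)$ if $|x|\vee|y|>h(\Delta)$; $g_\Delta$ is defined from $g$ in the same way. $f_{\Delta,i}$ and $g_{\Delta,il}$ denote components. *)

(* Defs.v *)
From HB Require Import structures.
From mathcomp Require Import all_boot all_order all_algebra.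
From mathcomp Require Import all_classical all_reals all_analysis.
Set Implicit Arguments. Unset Strict Implicit. Unset Printing Implicit Defensive.
Import Order.TTheory GRing.Theory Num.Theory.
Local Open Scope ring_scope.

(* Euclidean norm of a vector ('rV_d is a 1 x d matrix) / Frobenius
   (trace) norm of a matrix: sqrt of the sum of squares of the entries. *)
Definition enorm (R : realType) (p q : nat) (A : 'M[R]_(p, q)) : R :=
  Num.sqrt (\sum_(i < p) \sum_(j < q) A i j ^+ 2).

Definition mtrunc (R : realType) (d : nat) (V : lmodType R)
    (hD : R) (F : 'rV[R]_d -> 'rV[R]_d -> V) (x y : 'rV[R]_d) : V :=
  let M := Num.max (enorm x) (enorm y) in
  if M <= hD then F x y else (M / hD) *: F ((hD / M) *: x) ((hD / M) *: y).

(* Main.v *)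
Require Import Defs.
From HB Require Import structures.
From mathcomp Require Import all_boot all_order all_algebra.
From mathcomp Require Import all_classical all_reals all_analysis.
From mathcomp Require Import ring.
Import Order.TTheory GRing.Theory Num.Theory.
Local Open Scope classical_set_scope.
Local Open Scope ring_scope.

Theorem lemma4p1 (R : realType) (d m : nat)
  (f : 'rV[R]_d -> 'rV[R]_d -> 'rV[R]_d)
  (g : 'rV[R]_d -> 'rV[R]_d -> 'M[R]_(d, m))
  (L : R -> R)
  (* (i) local Lipschitz condition with constants L_R *)
  (HL : forall r : R, 0 < r -> 0 < L r /\
     forall x y xb yb : 'rV[R]_d,
       Num.max (Num.max (enorm x) (enorm y)) (Num.max (enorm xb) (enorm yb)) <= r ->
       Num.max (enorm (f x y - f xb yb)) (enorm (g x y - g xb yb))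
         <= L r * (enorm (x - xb) + enorm (y - yb)))
  (* (ii) the structural condition *)
  (a b : 'M[R]_d)
  (Ha : forall i j : 'I_d, i != j -> 0 <= a i j)
  (Hb : forall i j : 'I_d, 0 <= b i j)
  (Hfg : forall (i : 'I_d) (x y : 'rV[R]_d),
     2 * x ord0 i * f x y ord0 i + \sum_(l < m) (g x y i l) ^+ 2
       <= \sum_(j < d) a i j * x ord0 j ^+ 2 + \sum_(j < d) b i j * y ord0 j ^+ 2)
  (* the truncation function h on (0, Delta*] *)
  (Dstar : R) (HDstar : 0 < Dstar) (h : R -> R)
  (hpos : forall D, 0 < D -> D <= Dstar -> 0 < h D)
  (hdecr : forall D1 D2, 0 < D1 -> D1 < D2 -> D2 <= Dstar -> h D2 < h D1)
  (hlim : h D @[D --> 0^'+] --> +oo)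
  (hLlim : (L (h D)) ^+ 2 * D @[D --> 0^'+] --> 0)
  (D : R) (HD0 : 0 < D) (HD1 : D < Dstar) :
  exists a' b' : 'M[R]_d,
    (forall i j : 'I_d, i != j -> 0 <= a' i j) /\
    (forall i j : 'I_d, 0 <= b' i j) /\
    (forall (i : 'I_d) (x y : 'rV[R]_d),
       2 * x ord0 i * mtrunc (h D) f x y ord0 i
         + \sum_(l < m) (mtrunc (h D) g x y i l) ^+ 2
       <= \sum_(j < d) a' i j * x ord0 j ^+ 2 + \sum_(j < d) b' i j * y ord0 j ^+ 2).
Proof.
exists a, b; split; first exact: Ha; split; first exact: Hb.
move=> i x y; rewrite /mtrunc.
set M := Num.max (enorm x) (enorm y).
have hD0 : 0 < h D by apply: hpos => //; exact: ltW.
case: ifPn => [_|]; first exact: Hfg.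
rewrite -ltNge => hM.
have M0 : 0 < M by exact: lt_trans hM.
set c := h D / M.
have c0 : c != 0 by rewrite /c mulf_neq0 ?invr_eq0 // gt_eqF.
have H := Hfg i (c *: x) (c *: y).
have E1 : M / h D = c^-1 by rewrite /c invf_div.
rewrite E1.
set F := f _ _ in H *; set G := g _ _ in H *.
have L1 : 2 * x ord0 i * (c^-1 *: F) ord0 i + \sum_(l < m) (c^-1 *: G) i l ^+ 2
   = c^-1 ^+ 2 * (2 * (c *: x) ord0 i * F ord0 i + \sum_(l < m) G i l ^+ 2).
  rewrite !mxE mulrDr big_distrr /=; congr (_ + _).
    by rewrite expr2; field.
  by apply: eq_bigr => l _; rewrite mxE exprMn.
have R1 : \sum_(j < d) a i j * (c *: x) ord0 j ^+ 2 + \sum_(j < d) b i j * (c *: y) ord0 j ^+ 2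
   = c ^+ 2 * (\sum_(j < d) a i j * x ord0 j ^+ 2 + \sum_(j < d) b i j * y ord0 j ^+ 2).
  rewrite mulrDr !big_distrr /=; congr (_ + _); apply: eq_bigr => j _;
    by rewrite mxE exprMn mulrCA.
rewrite L1; rewrite R1 in H.
have k0 : 0 <= c^-1 ^+ 2 by rewrite sqr_ge0.
have := ler_wpM2l k0 H; rewrite mulrA -exprMn mulVf // expr1n mul1r; exact.
Qed.
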